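(* Let $\mathcal D=(C_1,C_2,C_3,C_4)$ be an ordered $4$-tuple of oriented circles in $\mathbb R^2$ (oriented lines allowed), and let $\mathbf M_{\mathcal D}$ be the real $4\times 3$ matrix whose $i$-th row is the curvature-center coordinate vector $\mathbf m(C_i)$. If $\mathcal D$ is an ordered, oriented Descartes configuration, then the first column of $\mathbf M=\mathbf M_{\mathcal D}$ is nonzero and $$\mathbf M^T\mathbf Q_D\mathbf M=\begin{pmatrix}0&0&0\\0&2&0\\0&0&2\end{pmatrix}.$$ Conversely, every real $4\times3$ matrix $\mathbf M$ with nonzero first column satisfying this equation equals $\mathbf M_{\mathcal D}$ for a unique ordered, oriented Descartes configuration $\mathcal D$.
   Context: An oriented circle is a circle together with a choice of unit normal pointing inward or outward. If it has radius $r$, its oriented curvature is $b=1/r$ for an inward normal and $b=-1/r$ for an outward normal; its interior is the open disk it bounds for an inward normal and the open exterior of that disk for an outward normal. A line is regarded as a circle of curvature $0$; an oriented line is a line with a chosen unit normal $\mathbf h=(h_1,h_2)$, and its interior is the open half-plane into which $\mathbf h$ points. A Descartes configuration is a set of four mutually tangent circles (lines allowed; two parallel lines count as tangent at $\infty$) with six distinct points of tangency. An oriented Descartes configuration is a Descartes configuration whose circles are oriented so that either the four interiors are pairwise disjoint, or they become pairwise disjoint after reversing all four orientations. Curvature-center coordinates: for an oriented circle with center $(x,y)$ and oriented curvature $b\neq0$, $\mathbf m(C)=(b,bx,by)$; for an oriented line with unit normal $\mathbf h$, $\mathbf m(C)=(0,h_1,h_2)$. The Descartes matrix is $\mathbf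 Q_D=\mathbf I-\tfrac12\mathbf 1\mathbf 1^T$, i.e. the $4\times4$ matrix with diagonal entries $1/2$ and off-diagonal entries $-1/2$. *)

(* Defs.v *)
From mathcomp Require Import all_boot all_order all_algebra.
From mathcomp Require Export reals.
Set Implicit Arguments. Unset Strict Implicit. Unset Printing Implicit Defensive.
Import Order.TTheory GRing.Theory Num.Theory.
Local Open Scope ring_scope.

(* An oriented (generalized) circle in R^2.
   - OCirc x y r inward : circle of center (x,y), radius r (> 0), with
     inward unit normal if [inward] is true, outward otherwise.
   - OLine h1 h2 c : the line {p | h1*p1 + h2*p2 = c} with unit normal
     h = (h1,h2) (h1^2+h2^2 = 1). *)
Inductive ocircle (R : Type) :=
| OCirc (x y r : R) (inward : bool)
| OLine (h1 h2 c : R).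

Section Defs.
Variable R : realType.

Definition valid_oc (C : ocircle R) : Prop :=
  match C with
  | OCirc _ _ r _ => 0 < r
  | OLine h1 h2 _ => h1 ^+ 2 + h2 ^+ 2 = 1
  end.

(* Points of the extended plane R^2 ∪ {∞}: None is the point at infinity. *)
Definition epoint := option (R * R).

Definition on_oc (C : ocircle R) (p : epoint) : Prop :=
  match C, p with
  | OCirc x y r _, Some (u, v) => (u - x) ^+ 2 + (v - y) ^+ 2 = r ^+ 2
  | OCirc _ _ _ _, None => False
  | OLine h1 h2 c, Some (u, v) => h1 * u + h2 * v = c
  | OLine _ _ _, None => True
  end.

Definition interior_oc (C : ocircle R) (p : R * R) : Prop :=
  let: (u, v) := p in
  match C with
  | OCirc x y r true => (u - x) ^+ 2 + (v - y) ^+ 2 < r ^+ 2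
  | OCirc x y r false => r ^+ 2 < (u - x) ^+ 2 + (v - y) ^+ 2
  | OLine h1 h2 c => c < h1 * u + h2 * v
  end.

Definition reverse_oc (C : ocircle R) : ocircle R :=
  match C with
  | OCirc x y r b => OCirc x y r (~~ b)
  | OLine h1 h2 c => OLine (- h1) (- h2) (- c)
  end.

(* Two generalized circles are tangent iff they have exactly one common
   point in R^2 ∪ {∞} (so two distinct parallel lines are tangent at ∞). *)
Definition tangent (C D : ocircle R) : Prop :=
  exists! p : epoint, on_oc C p /\ on_oc D p.

(* Descartes configuration (ordered): four mutually tangent circles with
   six distinct points of tangency. *)
Definition descartes (D : 'I_4 -> ocircle R) : Prop :=
  [/\ forall i, valid_oc (D i),
      forall i j, i != j -> tangent (D i) (D j) &
      forall (i j k l : 'I_4) (p : epoint),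
        (i < j)%N -> (k < l)%N -> (i, j) != (k, l) ->
        on_oc (D i) p -> on_oc (D j) p -> on_oc (D k) p -> on_oc (D l) p ->
        False].

Definition interiors_disjoint (D : 'I_4 -> ocircle R) : Prop :=
  forall i j, i != j -> forall p, interior_oc (D i) p -> interior_oc (D j) p -> False.

Definition oriented_descartes (D : 'I_4 -> ocircle R) : Prop :=
  descartes D /\
  (interiors_disjoint D \/ interiors_disjoint (fun i => reverse_oc (D i))).

Definition curv (C : ocircle R) : R :=
  match C with
  | OCirc _ _ r b => if b then r^-1 else - r^-1
  | OLine _ _ _ => 0
  end.

Definition mvec (C : ocircle R) : 'rV[R]_3 :=
  \row_(j < 3)
    match C with
    | OCirc x y r b =>
        let k := curv C in
        match nat_of_ord j with 0%N => k | 1%N => k * x | _ => k * y end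
    | OLine h1 h2 _ =>
        match nat_of_ord j with 0%N => 0 | 1%N => h1 | _ => h2 end
    end.

Definition MD (D : 'I_4 -> ocircle R) : 'M[R]_(4, 3) :=
  \matrix_(i < 4, j < 3) mvec (D i) 0 j.

Definition QD : 'M[R]_4 :=
  \matrix_(i < 4, j < 4) (if i == j then 2^-1 else - 2^-1).

Definition W3 : 'M[R]_3 :=
  \matrix_(i < 3, j < 3) (if (i == j) && (nat_of_ord i != 0%N) then 2 else 0).

End Defs.

(* Main.v *)
Require Import Defs.
From mathcomp Require Import all_boot all_order all_algebra reals.
From mathcomp Require Import ring lra.
From Stdlib Require Import FunctionalExtensionality.
Import Order.TTheory GRing.Theory Num.Theory.
Local Open Scope ring_scope.
Set Implicit Arguments. Unset Strict Implicit. Unset Printing Implicit Defensive.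

Definition o0 : 'I_4 := @Ordinal 4 0 isT.
Definition o1 : 'I_4 := @Ordinal 4 1 isT.
Definition o2 : 'I_4 := @Ordinal 4 2 isT.
Definition o3 : 'I_4 := @Ordinal 4 3 isT.

Lemma ord4_cases (i : 'I_4) : i = o0 \/ i = o1 \/ i = o2 \/ i = o3.
Proof.
case: i => [[|[|[|[|n]]]] Hn].
- by left; apply: val_inj.
- by right; left; apply: val_inj.
- by right; right; left; apply: val_inj.
- by right; right; right; apply: val_inj.
- by [].
Qed.

Lemma sum4 (R : nmodType) (F : 'I_4 -> R) : \sum_(i < 4) F i = F o0 + F o1 + F o2 + F o3.
Proof.
rewrite !big_ord_recl big_ord0 addr0 !addrA.
have e0 : (ord0 : 'I_4) = o0 by apply: val_inj.
by rewrite e0; congr (_ + F _ + F _ + F _); apply: val_inj.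
Qed.

Section S.
Variable R : realType.

Definition QW : 'M[R]_4 := \matrix_(i < 4, j < 4)
  match nat_of_ord i, nat_of_ord j with
  | 0, 1 | 1, 0 => - 2^-1 | 2, 2 | 3, 3 => 1 | _, _ => 0 end.
Definition PW : 'M[R]_4 := \matrix_(i < 4, j < 4)
  match nat_of_ord i, nat_of_ord j with
  | 0, 1 | 1, 0 => - 2 | 2, 2 | 3, 3 => 1 | _, _ => 0 end.
Definition GG : 'M[R]_4 := \matrix_(i < 4, j < 4)
  if nat_of_ord i == nat_of_ord j then 1 else -1.

Ltac ordcase i := case: (ord4_cases i) => [->|[->|[->|->]]].

Lemma QWPW : QW *m PW = 1%:M.
Proof.
apply/matrixP=> i j; rewrite !mxE sum4 !mxE.
ordcase i; ordcase j; rewrite /= ?mulr0 ?mul0r ?mulr1 ?addr0 ?add0r. all: by field.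
Qed.

Lemma PWQW : PW *m QW = 1%:M.
Proof.
apply/matrixP=> i j; rewrite !mxE sum4 !mxE.
ordcase i; ordcase j; rewrite /= ?mulr0 ?mul0r ?mulr1 ?addr0 ?add0r. all: by field.
Qed.
Lemma QDGG : QD R *m GG = 2%:M.
Proof.
apply/matrixP=> i j; rewrite !mxE sum4 !mxE.
ordcase i; ordcase j; rewrite /= ?mulr0 ?mul0r ?mulr1 ?addr0 ?add0r. all: by field.
Qed.
Lemma GGQD : GG *m QD R = 2%:M.
Proof.
apply/matrixP=> i j; rewrite !mxE sum4 !mxE.
ordcase i; ordcase j; rewrite /= ?mulr0 ?mul0r ?mulr1 ?addr0 ?add0r. all: by field.
Qed.

Lemma two_neq0 : (2 : R) != 0. Proof. by rewrite pnatr_eq0. Qed.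

Lemma gram_aug (W : 'M[R]_4) : W *m QW *m W^T = GG -> W^T *m QD R *m W = 2 *: PW.
Proof.
move=> H.
have H1 : (W *m QW) *m (2^-1 *: (W^T *m QD R)) = 1%:M.
  by rewrite -scalemxAr mulmxA H GGQD scale_scalar_mx mulVf ?two_neq0.
have H2 := mulmx1C H1.
have H3 : W^T *m QD R *m W *m QW = 2%:M.
  move: H2; rewrite -scalemxAl !mulmxA => H2.
  apply: (@scalerI _ _ 2^-1); first by rewrite invr_eq0 two_neq0.
  by rewrite H2 scale_scalar_mx mulVf ?two_neq0.
by rewrite -[LHS]mulmx1 -QWPW mulmxA H3 mul_scalar_mx.
Qed.

Lemma aug_gram (W : 'M[R]_4) : W^T *m QD R *m W = 2 *: PW -> W *m QW *m W^T = GG.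
Proof.
move=> H.
have H1 : (2^-1 *: (W^T *m QD R)) *m (W *m QW) = 1%:M.
  by rewrite -scalemxAl mulmxA H -scalemxAl PWQW scalerA mulVf ?two_neq0 // scale1r.
have H2 := mulmx1C H1.
have H3 : W *m QW *m W^T *m QD R = 2%:M.
  move: H2; rewrite -scalemxAr !mulmxA => H2.
  apply: (@scalerI _ _ 2^-1); first by rewrite invr_eq0 two_neq0.
  by rewrite H2 scale_scalar_mx mulVf ?two_neq0.
have H4 : W *m QW *m W^T *m (QD R *m GG) = 2 *: GG by rewrite mulmxA H3 mul_scalar_mx.
apply: (@scalerI _ _ 2 two_neq0).
by rewrite -H4 QDGG mul_mx_scalar.
Qed.

Definition Lf4 (v w : 'I_4 -> R) : R :=
  - (v o0 * w o1 + v o1 * w o0) / 2 + v o2 * w o2 + v o3 * w o3.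
Definition Bq4 (f g : 'I_4 -> R) : R :=
  f o0 * g o0 + f o1 * g o1 + f o2 * g o2 + f o3 * g o3
  - (f o0 + f o1 + f o2 + f o3) * (g o0 + g o1 + g o2 + g o3) / 2.

Lemma E1 (W : 'M[R]_4) i j : (W *m QW *m W^T) i j = Lf4 (W i) (W j).
Proof. rewrite !mxE sum4 !mxE !sum4 !mxE /= /Lf4. ring. Qed.

Lemma E2 n (A : 'M[R]_(4, n)) j k :
  (A^T *m QD R *m A) j k = Bq4 (fun i => A i j) (fun i => A i k).
Proof. rewrite !mxE sum4 !mxE !sum4 !mxE /= /Bq4. by field. Qed.
End S.

Section G.
Variable R : realType.
Implicit Types (C D : ocircle R) (x y r h c g d u v : R) (b : bool).

Definition kx C : R := match C with OCirc x _ _ _ => curv C * x | OLine h1 _ _ => h1 end.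
Definition ky C : R := match C with OCirc _ y _ _ => curv C * y | OLine _ h2 _ => h2 end.
Definition ku C : R := match C with
  | OCirc x y _ _ => curv C * (x ^+ 2 + y ^+ 2) - (curv C)^-1
  | OLine _ _ c => 2 * c end.
Definition wv C (j : 'I_4) : R :=
  match nat_of_ord j with 0 => ku C | 1 => curv C | 2 => kx C | _ => ky C end.
Definition LL C D : R := Lf4 (wv C) (wv D).

Lemma LLE C D : LL C D = - (ku C * curv D + curv C * ku D) / 2 + kx C * kx D + ky C * ky D.
Proof. by []. Qed.

Lemma LL_sym C D : LL C D = LL D C.
Proof. rewrite !LLE; ring. Qed.

Lemma curv_circ x y r b : 0 < r -> curv (OCirc x y r b) != 0.
Proof. move=> r0 /=; case: b; rewrite ?oppr_eq0 invr_eq0 gt_eqF //. Qed.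

Lemma LL_cc x1 y1 r1 b1 x2 y2 r2 b2 : 0 < r1 -> 0 < r2 ->
  LL (OCirc x1 y1 r1 b1) (OCirc x2 y2 r2 b2) =
  (curv (OCirc x2 y2 r2 b2) / curv (OCirc x1 y1 r1 b1) + curv (OCirc x1 y1 r1 b1) / curv (OCirc x2 y2 r2 b2)
   - curv (OCirc x1 y1 r1 b1) * curv (OCirc x2 y2 r2 b2) * ((x1 - x2) ^+ 2 + (y1 - y2) ^+ 2)) / 2.
Proof.
move=> r1p r2p.
pose k1 := curv (OCirc x1 y1 r1 b1); pose k2 := curv (OCirc x2 y2 r2 b2).
have h1 : k1 != 0 by apply: curv_circ.
have h2 : k2 != 0 by apply: curv_circ.
rewrite LLE /=; rewrite /k1 /k2 /= in h1 h2 *; move: h1 h2.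
generalize (if b1 then r1^-1 else - r1^-1) (if b2 then r2^-1 else - r2^-1) => K1 K2 h1 h2.
by field; rewrite h1 h2.
Qed.

Lemma LL_lc h1 h2 c x y r b : 0 < r ->
  LL (OLine h1 h2 c) (OCirc x y r b) = curv (OCirc x y r b) * (h1 * x + h2 * y - c).
Proof. move=> r0; rewrite LLE /= mul0r addr0. by case: b; field; rewrite gt_eqF. Qed.

Lemma LL_ll h1 h2 c g1 g2 d : LL (OLine h1 h2 c) (OLine g1 g2 d) = h1 * g1 + h2 * g2.
Proof. rewrite LLE /=. by field. Qed.

Lemma LL_self C : valid_oc C -> LL C C = 1.
Proof.
case: C => [x y r b|h1 h2 c] /= H; rewrite LLE /=.
- have := curv_circ x y b H => /=.
  generalize (if b then r^-1 else - r^-1) => K hk. by field.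
- by rewrite mulr0 mul0r addr0 oppr0 mul0r add0r -!expr2.
Qed.


Lemma sq_eq_cases (a b : R) : a ^+ 2 = b ^+ 2 -> a = b \/ a = - b.
Proof.
move=> H; have : (a - b) * (a + b) = 0 by rewrite -subr_sqr H subrr.
move/eqP; rewrite mulf_eq0 subr_eq0 addr_eq0 => /orP[] /eqP; by [left|right].
Qed.

Lemma sumsq0 (a b : R) : a ^+ 2 + b ^+ 2 = 0 -> a = 0 /\ b = 0.
Proof.
move=> H; have ha := sqr_ge0 a; have hb := sqr_ge0 b.
have a0 : a ^+ 2 = 0 by lra.
have b0 : b ^+ 2 = 0 by lra.
by split; apply/eqP; rewrite -sqrf_eq0; apply/eqP.
Qed.

Lemma cc_tangent x1 y1 r1 b1 x2 y2 r2 b2 : 0 < r1 -> 0 < r2 ->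
  tangent (OCirc x1 y1 r1 b1) (OCirc x2 y2 r2 b2) ->
  (x1 - x2) ^+ 2 + (y1 - y2) ^+ 2 = (r1 + r2) ^+ 2 \/
  (x1 - x2) ^+ 2 + (y1 - y2) ^+ 2 = (r1 - r2) ^+ 2.
Proof.
move=> r1p r2p [[[u v]|] [[/= H1 H2] Hu]]; last by [].
have [D0|D0] := eqVneq ((x2 - x1) ^+ 2 + (y2 - y1) ^+ 2) 0.
  right.
  case: (sumsq0 D0) => /eqP; rewrite subr_eq0 => /eqP ex /eqP; rewrite subr_eq0 => /eqP ey.
  subst x2 y2.
  have : r1 = r2 by nra.
  by move=> ->; rewrite !subrr expr0n /= addr0.
pose t := ((u - x1) * (x2 - x1) + (v - y1) * (y2 - y1)) / ((x2 - x1) ^+ 2 + (y2 - y1) ^+ 2).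
have P1 : on_oc (OCirc x1 y1 r1 b1)
   (Some (x1 + 2 * t * (x2 - x1) - (u - x1), y1 + 2 * t * (y2 - y1) - (v - y1))).
  rewrite /= -H1 /t. by field.
have P2 : on_oc (OCirc x2 y2 r2 b2)
   (Some (x1 + 2 * t * (x2 - x1) - (u - x1), y1 + 2 * t * (y2 - y1) - (v - y1))).
  rewrite /= -H2 /t. by field.
case: (Hu (Some (x1 + 2 * t * (x2 - x1) - (u - x1), y1 + 2 * t * (y2 - y1) - (v - y1))) (conj P1 P2)) => Eu Ev.
have Vx : u - x1 = t * (x2 - x1) by apply: (@mulfI _ 2); rewrite ?two_neq0 //; lra.
have Vy : v - y1 = t * (y2 - y1) by apply: (@mulfI _ 2); rewrite ?two_neq0 //; lra.
have Hr1 : r1 ^+ 2 = t ^+ 2 * ((x2 - x1) ^+ 2 + (y2 - y1) ^+ 2).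
  by rewrite -H1 Vx Vy; ring.
have Hr2 : r2 ^+ 2 = (t - 1) ^+ 2 * ((x2 - x1) ^+ 2 + (y2 - y1) ^+ 2).
  rewrite -H2 (_ : u - x2 = (u - x1) - (x2 - x1)); last by ring.
  rewrite (_ : v - y2 = (v - y1) - (y2 - y1)); last by ring.
  by rewrite Vx Vy; ring.
have HD : (x1 - x2) ^+ 2 + (y1 - y2) ^+ 2 = (x2 - x1) ^+ 2 + (y2 - y1) ^+ 2 by ring.
have : ((x1 - x2) ^+ 2 + (y1 - y2) ^+ 2 - (r1 + r2) ^+ 2) *
       ((x1 - x2) ^+ 2 + (y1 - y2) ^+ 2 - (r1 - r2) ^+ 2) = 0.
  have -> : ((x1 - x2) ^+ 2 + (y1 - y2) ^+ 2 - (r1 + r2) ^+ 2) *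
       ((x1 - x2) ^+ 2 + (y1 - y2) ^+ 2 - (r1 - r2) ^+ 2) =
      ((x1 - x2) ^+ 2 + (y1 - y2) ^+ 2 - r1 ^+ 2 - r2 ^+ 2) ^+ 2 - 4 * r1 ^+ 2 * r2 ^+ 2 by ring.
  rewrite HD Hr1 Hr2; ring.
move/eqP; rewrite mulf_eq0 !subr_eq0 => /orP[] /eqP; by [left|right].
Qed.

Definition disj C D := forall p, interior_oc C p -> interior_oc D p -> False.

Lemma far_pt (e f r1 r2 : R) : 0 < r1 -> 0 < r2 ->
  r1 ^+ 2 < (r1 + r2 + e ^+ 2 + 1) ^+ 2 /\
  r2 ^+ 2 < (e + (r1 + r2 + e ^+ 2 + 1)) ^+ 2 + f ^+ 2.
Proof.
move=> h1 h2; have he := sqr_ge0 e; have hf := sqr_ge0 f.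
have k1 : r1 < r1 + r2 + e ^+ 2 + 1 by lra.
have k2 : r2 < e + (r1 + r2 + e ^+ 2 + 1) by nra.
split; nra.
Qed.

Lemma cc_fwd x1 y1 r1 b1 x2 y2 r2 b2 : 0 < r1 -> 0 < r2 ->
  tangent (OCirc x1 y1 r1 b1) (OCirc x2 y2 r2 b2) ->
  disj (OCirc x1 y1 r1 b1) (OCirc x2 y2 r2 b2) ->
  LL (OCirc x1 y1 r1 b1) (OCirc x2 y2 r2 b2) = -1.
Proof.
move=> r1p r2p /cc_tangent - /(_ r1p r2p) HD Hdis; rewrite LL_cc //.
have r10 : r1 != 0 by rewrite gt_eqF.
have r20 : r2 != 0 by rewrite gt_eqF.
case: b1 Hdis; case: b2 => Hdis /=; case: HD => HD.
- rewrite HD; field; by rewrite r10 r20.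
- exfalso; case: (lerP r1 r2) => h.
  + by apply: (Hdis (x1, y1)) => /=; nra.
  + by apply: (Hdis (x2, y2)) => /=; nra.
- exfalso; by apply: (Hdis (x1, y1)) => /=; nra.
- rewrite HD; field; by rewrite r10 r20.
- exfalso; by apply: (Hdis (x2, y2)) => /=; nra.
- rewrite HD; field; by rewrite r10 r20.
- exfalso; have [f1 f2] := far_pt (x1 - x2) (y1 - y2) r1p r2p.
  apply: (Hdis (x1 + (r1 + r2 + (x1 - x2) ^+ 2 + 1), y1)) => /=.
  + rewrite (_ : x1 + (r1 + r2 + (x1 - x2) ^+ 2 + 1) - x1 = r1 + r2 + (x1 - x2) ^+ 2 + 1); last by ring.
    by rewrite subrr expr0n /= addr0.
  + rewrite (_ : x1 + (r1 + r2 + (x1 - x2) ^+ 2 + 1) - x2 = x1 - x2 + (r1 + r2 + (x1 - x2) ^+ 2 + 1)); last by ring.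
    by [].
- exfalso; have [f1 f2] := far_pt (x1 - x2) (y1 - y2) r1p r2p.
  apply: (Hdis (x1 + (r1 + r2 + (x1 - x2) ^+ 2 + 1), y1)) => /=.
  + rewrite (_ : x1 + (r1 + r2 + (x1 - x2) ^+ 2 + 1) - x1 = r1 + r2 + (x1 - x2) ^+ 2 + 1); last by ring.
    by rewrite subrr expr0n /= addr0.
  + rewrite (_ : x1 + (r1 + r2 + (x1 - x2) ^+ 2 + 1) - x2 = x1 - x2 + (r1 + r2 + (x1 - x2) ^+ 2 + 1)); last by ring.
    by [].
Qed.

Lemma ll_fwd h1 h2 c g1 g2 d : h1 ^+ 2 + h2 ^+ 2 = 1 -> g1 ^+ 2 + g2 ^+ 2 = 1 ->
  tangent (OLine h1 h2 c) (OLine g1 g2 d) -> disj (OLine h1 h2 c) (OLine g1 g2 d) ->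
  LL (OLine h1 h2 c) (OLine g1 g2 d) = -1.
Proof.
move=> Hh Hg [p [[Hp1 Hp2] Hu]] Hdis; rewrite LL_ll.
have HN := Hu None (conj I I).
have det0 : h1 * g2 - h2 * g1 = 0.
  case: (eqVneq (h1 * g2 - h2 * g1) 0) => // Hdet; exfalso.
  pose q : epoint R := Some ((c * g2 - d * h2) / (h1 * g2 - h2 * g1),
                             (h1 * d - g1 * c) / (h1 * g2 - h2 * g1)).
  have Hq : on_oc (OLine h1 h2 c) q /\ on_oc (OLine g1 g2 d) q.
    by split; rewrite /=; field.
  by move: (Hu q Hq); rewrite HN.
have L2 : (h1 * g1 + h2 * g2) ^+ 2 = 1 ^+ 2.
  have -> : (h1 * g1 + h2 * g2) ^+ 2 = (h1 ^+ 2 + h2 ^+ 2) * (g1 ^+ 2 + g2 ^+ 2) - (h1 * g2 - h2 * g1) ^+ 2 by ring.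
  by rewrite Hh Hg det0 expr0n /= subr0 mulr1 expr1n.
case: (sq_eq_cases L2) => E; last by rewrite E.
exfalso.
have : (h1 - g1) ^+ 2 + (h2 - g2) ^+ 2 = 0.
  have -> : (h1 - g1) ^+ 2 + (h2 - g2) ^+ 2 = (h1 ^+ 2 + h2 ^+ 2) + (g1 ^+ 2 + g2 ^+ 2) - 2 * (h1 * g1 + h2 * g2) by ring.
  by rewrite Hh Hg E; ring.
case/sumsq0 => /eqP; rewrite subr_eq0 => /eqP e1 /eqP; rewrite subr_eq0 => /eqP e2; subst g1 g2.
apply: (Hdis ((c ^+ 2 + d ^+ 2 + 1) * h1, (c ^+ 2 + d ^+ 2 + 1) * h2)) => /=.
- have -> : h1 * ((c ^+ 2 + d ^+ 2 + 1) * h1) + h2 * ((c ^+ 2 + d ^+ 2 + 1) * h2) = (c ^+ 2 + d ^+ 2 + 1) * (h1 ^+ 2 + h2 ^+ 2) by ring.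
  rewrite Hh mulr1; nra.
- have -> : h1 * ((c ^+ 2 + d ^+ 2 + 1) * h1) + h2 * ((c ^+ 2 + d ^+ 2 + 1) * h2) = (c ^+ 2 + d ^+ 2 + 1) * (h1 ^+ 2 + h2 ^+ 2) by ring.
  rewrite Hh mulr1; nra.
Qed.

Lemma lc_tangent h1 h2 c x y r b : h1 ^+ 2 + h2 ^+ 2 = 1 -> 0 < r ->
  tangent (OLine h1 h2 c) (OCirc x y r b) -> (h1 * x + h2 * y - c) ^+ 2 = r ^+ 2.
Proof.
move=> Hh r0 [[[u v]|] [[H1 H2] Hu]]; last by case: H2.
move: H1 H2 => /= H1 H2.
pose t := - (u - x) * h2 + (v - y) * h1.
have P1 : on_oc (OLine h1 h2 c) (Some (u + 2 * t * h2, v - 2 * t * h1)).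
  by rewrite /= -H1 /t; ring.
have P2 : on_oc (OCirc x y r b) (Some (u + 2 * t * h2, v - 2 * t * h1)).
  rewrite /= -H2.
  have -> : (u + 2 * t * h2 - x) ^+ 2 + (v - 2 * t * h1 - y) ^+ 2 =
     (u - x) ^+ 2 + (v - y) ^+ 2 + 4 * t ^+ 2 * (h1 ^+ 2 + h2 ^+ 2 - 1) by rewrite /t; ring.
  by rewrite Hh subrr mulr0 addr0.
case: (Hu _ (conj P1 P2)) => Eu Ev.
have t0 : t = 0.
  have -> : t = t * (h1 ^+ 2 + h2 ^+ 2) by rewrite Hh mulr1.
  have a1 : t * h2 = 0 by lra.
  have a2 : t * h1 = 0 by lra.
  have -> : t * (h1 ^+ 2 + h2 ^+ 2) = (t * h1) * h1 + (t * h2) * h2 by ring.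
  by rewrite a1 a2 !mul0r addr0.
rewrite -H2.
have -> : (u - x) ^+ 2 + (v - y) ^+ 2 =
   (h1 * (u - x) + h2 * (v - y)) ^+ 2 + t ^+ 2
   - ((u - x) ^+ 2 + (v - y) ^+ 2) * (h1 ^+ 2 + h2 ^+ 2 - 1) by rewrite /t; ring.
rewrite Hh subrr mulr0 subr0 t0 expr0n /= addr0.
have -> : h1 * (u - x) + h2 * (v - y) = (h1 * u + h2 * v) - (h1 * x + h2 * y) by ring.
rewrite H1; ring.
Qed.

Lemma lc_fwd h1 h2 c x y r b : h1 ^+ 2 + h2 ^+ 2 = 1 -> 0 < r ->
  tangent (OLine h1 h2 c) (OCirc x y r b) -> disj (OLine h1 h2 c) (OCirc x y r b) ->
  LL (OLine h1 h2 c) (OCirc x y r b) = -1.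
Proof.
move=> Hh r0 /lc_tangent - /(_ Hh r0) HE Hdis; rewrite LL_lc //.
have r00 : r != 0 by rewrite gt_eqF.
case: b Hdis => Hdis /=; case: (sq_eq_cases HE) => E; rewrite ?E.
- exfalso; apply: (Hdis (x, y)) => /=; first by lra.
  by rewrite !subrr expr0n /= addr0 exprn_gt0.
- by rewrite mulrN mulVf.
- exfalso.
  apply: (Hdis (x + (r + (h1 * x + h2 * y - c) ^+ 2 + 1) * h1, y + (r + (h1 * x + h2 * y - c) ^+ 2 + 1) * h2)) => /=.
  + have -> : h1 * (x + (r + (h1 * x + h2 * y - c) ^+ 2 + 1) * h1) + h2 * (y + (r + (h1 * x + h2 * y - c) ^+ 2 + 1) * h2)
       = (h1 * x + h2 * y - c) + (r + (h1 * x + h2 * y - c) ^+ 2 + 1) * (h1 ^+ 2 + h2 ^+ 2) + c by ring.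
    rewrite Hh mulr1. have := sqr_ge0 (h1 * x + h2 * y - c + 2^-1). nra.
  + have -> : (x + (r + (h1 * x + h2 * y - c) ^+ 2 + 1) * h1 - x) ^+ 2 + (y + (r + (h1 * x + h2 * y - c) ^+ 2 + 1) * h2 - y) ^+ 2
       = (r + (h1 * x + h2 * y - c) ^+ 2 + 1) ^+ 2 * (h1 ^+ 2 + h2 ^+ 2) by ring.
    rewrite Hh mulr1. have := sqr_ge0 (h1 * x + h2 * y - c). nra.
- exfalso.
  apply: (Hdis (x + (r + (h1 * x + h2 * y - c) ^+ 2 + 1) * h1, y + (r + (h1 * x + h2 * y - c) ^+ 2 + 1) * h2)) => /=.
  + have -> : h1 * (x + (r + (h1 * x + h2 * y - c) ^+ 2 + 1) * h1) + h2 * (y + (r + (h1 * x + h2 * y - c) ^+ 2 + 1) * h2)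
       = (h1 * x + h2 * y - c) + (r + (h1 * x + h2 * y - c) ^+ 2 + 1) * (h1 ^+ 2 + h2 ^+ 2) + c by ring.
    rewrite Hh mulr1. have := sqr_ge0 (h1 * x + h2 * y - c + 2^-1). nra.
  + have -> : (x + (r + (h1 * x + h2 * y - c) ^+ 2 + 1) * h1 - x) ^+ 2 + (y + (r + (h1 * x + h2 * y - c) ^+ 2 + 1) * h2 - y) ^+ 2
       = (r + (h1 * x + h2 * y - c) ^+ 2 + 1) ^+ 2 * (h1 ^+ 2 + h2 ^+ 2) by ring.
    rewrite Hh mulr1. have := sqr_ge0 (h1 * x + h2 * y - c). nra.
Qed.

Lemma tangent_sym C D : tangent C D -> tangent D C.
Proof. by case=> p [[H1 H2] Hu]; exists p; split => // q [q1 q2]; apply: Hu. Qed.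

Lemma disj_sym C D : disj C D -> disj D C.
Proof. by move=> H p h1 h2; apply: (H p). Qed.

Lemma LL_fwd C D : valid_oc C -> valid_oc D -> tangent C D -> disj C D -> LL C D = -1.
Proof.
case: C => [x1 y1 r1 b1|h1 h2 c]; case: D => [x2 y2 r2 b2|g1 g2 d] /= vC vD T Dj.
- exact: cc_fwd.
- by rewrite LL_sym; apply: lc_fwd => //; [apply: tangent_sym | apply: disj_sym].
- exact: lc_fwd.
- exact: ll_fwd.
Qed.

Lemma curv_rev C : curv (reverse_oc C) = - curv C.
Proof. by case: C => [x y r []|h1 h2 c] /=; rewrite ?opprK ?oppr0. Qed.
Lemma kx_rev C : kx (reverse_oc C) = - kx C.
Proof. by case: C => [x y r []|h1 h2 c] //=; rewrite mulNr ?opprK. Qed.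
Lemma ky_rev C : ky (reverse_oc C) = - ky C.
Proof. by case: C => [x y r []|h1 h2 c] //=; rewrite mulNr ?opprK. Qed.
Lemma ku_rev C : ku (reverse_oc C) = - ku C.
Proof.
case: C => [x y r b|h1 h2 c] /=; last by rewrite mulrN.
have := curv_rev (OCirc x y r b) => /= ->.
by rewrite mulNr invrN opprB opprK addrC.
Qed.

Lemma LL_rev C D : LL (reverse_oc C) (reverse_oc D) = LL C D.
Proof. rewrite !LLE !curv_rev !kx_rev !ky_rev !ku_rev; ring. Qed.

Lemma valid_rev C : valid_oc C -> valid_oc (reverse_oc C).
Proof. by case: C => [x y r b|h1 h2 c] //=; rewrite !sqrrN. Qed.

Lemma on_rev C p : on_oc (reverse_oc C) p <-> on_oc C p.
Proof.
case: C => [x y r b|h1 h2 c]; case: p => [[u v]|] //=.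
split => H; [apply: oppr_inj; rewrite -H | rewrite -H]; ring.
Qed.

Lemma tangent_rev C D : tangent C D -> tangent (reverse_oc C) (reverse_oc D).
Proof.
case=> p [[H1 H2] Hu]; exists p; split; first by split; apply/on_rev.
by move=> q [/on_rev q1 /on_rev q2]; apply: Hu.
Qed.

Lemma fwd_LL (D : 'I_4 -> ocircle R) : oriented_descartes D ->
  forall i j, i != j -> LL (D i) (D j) = -1.
Proof.
case=> [[Hv Ht _] Hor] i j ij; case: Hor => Hdisj.
- by apply: LL_fwd => //; [apply: Ht | apply: Hdisj].
- rewrite -LL_rev; apply: LL_fwd; try apply: valid_rev => //.
  + by apply: tangent_rev; apply: Ht.
  + exact: Hdisj.
Qed.
End G.

Definition p0 : 'I_3 := @Ordinal 3 0 isT.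
Definition p1 : 'I_3 := @Ordinal 3 1 isT.
Definition p2 : 'I_3 := @Ordinal 3 2 isT.

Lemma ord3_cases (i : 'I_3) : i = p0 \/ i = p1 \/ i = p2.
Proof.
case: i => [[|[|[|n]]] Hn].
- by left; apply: val_inj.
- by right; left; apply: val_inj.
- by right; right; apply: val_inj.
- by [].
Qed.

Section F.
Variable R : realType.
Implicit Types (C : ocircle R) (D : 'I_4 -> ocircle R).

Definition WD D : 'M[R]_4 := \matrix_(i < 4, j < 4) wv (D i) j.

Lemma LL_WD D i j : Lf4 (WD D i) (WD D j) = LL (D i) (D j).
Proof. by rewrite /LL /Lf4 !mxE. Qed.

Lemma GG_ne (i j : 'I_4) : i != j -> GG R i j = -1.
Proof. by move=> ij; rewrite mxE ifF //; apply: negbTE. Qed.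

Lemma GG_eq (i : 'I_4) : GG R i i = 1.
Proof. by rewrite mxE eqxx. Qed.

Lemma WD_gram D : (forall i, valid_oc (D i)) ->
  (forall i j, i != j -> LL (D i) (D j) = -1) -> WD D *m QW R *m (WD D)^T = GG R.
Proof.
move=> Hv HL; apply/matrixP => i j; rewrite E1 LL_WD.
case: (eqVneq i j) => [->|ij]; first by rewrite GG_eq LL_self.
by rewrite GG_ne // HL.
Qed.

Lemma mvec_wv C (j : 'I_3) : mvec C 0 j = wv C (lift ord0 j).
Proof. by rewrite mxE; case: C => [x y r b|h1 h2 c]; case: j => [[|[|[|?]]] ?]. Qed.

Lemma MD_WD D i (j : 'I_3) : MD D i j = WD D i (lift ord0 j).
Proof. by rewrite [MD _ _ _]mxE mvec_wv mxE. Qed.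

Lemma forward D : oriented_descartes D ->
  col 0 (MD D) != 0 /\ (MD D)^T *m QD R *m MD D = W3 R.
Proof.
move=> HD.
have Hv : forall i, valid_oc (D i) by case: HD => [[]].
have Haug := gram_aug (WD_gram Hv (fwd_LL HD)).
split.
- apply/eqP => H0.
  have := congr1 (fun A : 'M_4 => A o0 o1) Haug; rewrite E2 !mxE /=.
  have Z : forall i, WD D i o1 = 0.
    move=> i; have := congr1 (fun A : 'M[R]_(4,1) => A i 0) H0.
    rewrite [col _ _ _ _]mxE MD_WD [RHS]mxE => E.
    by rewrite -E; congr (WD D i _); apply: val_inj.
  rewrite /Bq4 !Z; lra.
- apply/matrixP => j k; rewrite E2.
  have := congr1 (fun A : 'M_4 => A (lift ord0 j) (lift ord0 k)) Haug; rewrite E2 /= => E.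
  rewrite /Bq4 !MD_WD; rewrite /Bq4 in E; rewrite E !mxE.
  case: (ord3_cases j) => [->|[->|->]]; case: (ord3_cases k) => [->|[->|->]] /=; lra.
Qed.
End F.

Section U.
Variable R : realType.
Variables (a x y : 'I_4 -> R).
Definition sumf (f : 'I_4 -> R) := f o0 + f o1 + f o2 + f o3.
Definition sU := sumf a.
Definition pU := sumf x / 2.
Definition qU := sumf y / 2.
Definition cU := 4 * (2 + pU ^+ 2 + qU ^+ 2) / sU ^+ 2.
Definition uU (i : 'I_4) := 4 / sU * (1 + pU * x i + qU * y i) - cU * a i.

Hypothesis s0 : sU != 0.
Hypotheses (Haa : Bq4 a a = 0) (Hax : Bq4 a x = 0) (Hay : Bq4 a y = 0)
  (Hxx : Bq4 x x = 2) (Hyy : Bq4 y y = 2) (Hxy : Bq4 x y = 0).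

Lemma Bq4_sym (f g : 'I_4 -> R) : Bq4 f g = Bq4 g f.
Proof. rewrite /Bq4; ring. Qed.

Lemma Bua : Bq4 uU a = -4.
Proof.
have -> : Bq4 uU a = 4 / sU * (- sU + pU * Bq4 x a + qU * Bq4 y a) - cU * Bq4 a a.
  rewrite /Bq4 /uU /sU /sumf. by field; move: s0; rewrite /sU /sumf.
rewrite Bq4_sym Hax Bq4_sym Hay Haa; field. exact: s0.
Qed.

Lemma Bux : Bq4 uU x = 0.
Proof.
have -> : Bq4 uU x = 4 / sU * (- (2 * pU) + pU * Bq4 x x + qU * Bq4 y x) - cU * Bq4 a x.
  rewrite /Bq4 /uU /pU /sumf. by field; move: s0; rewrite /sU /sumf.
rewrite Hxx Bq4_sym Hxy Hax; field. exact: s0.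
Qed.

Lemma Buy : Bq4 uU y = 0.
Proof.
have -> : Bq4 uU y = 4 / sU * (- (2 * qU) + pU * Bq4 x y + qU * Bq4 y y) - cU * Bq4 a y.
  rewrite /Bq4 /uU /qU /sumf. by field; move: s0; rewrite /sU /sumf.
rewrite Hyy Hxy Hay; field. exact: s0.
Qed.

Lemma Buu : Bq4 uU uU = 0.
Proof.
have -> : Bq4 uU uU = (4 / sU) ^+ 2 * (-4 - 4 * pU ^+ 2 - 4 * qU ^+ 2 + pU ^+ 2 * Bq4 x x
    + qU ^+ 2 * Bq4 y y + 2 * pU * qU * Bq4 x y)
    - 2 * (4 / sU) * cU * (- sU + pU * Bq4 x a + qU * Bq4 y a) + cU ^+ 2 * Bq4 a a.
  rewrite /Bq4 /uU /pU /qU /sU /sumf. by field; move: s0; rewrite /sU /sumf.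
rewrite Hxx Hyy Hxy Bq4_sym Hax Bq4_sym Hay Haa /cU; field. exact: s0.
Qed.
End U.

Section C.
Variable R : realType.

Definition mkC (u a x y : R) : ocircle R :=
  if a == 0 then OLine x y (u / 2) else OCirc (x / a) (y / a) (`|a|^-1) (0 < a).

Definition vec4 (u a x y : R) (j : 'I_4) : R :=
  match nat_of_ord j with 0 => u | 1 => a | 2 => x | _ => y end.

Lemma curv_mkC (a x y : R) : a != 0 -> curv (OCirc (x / a) (y / a) (`|a|^-1) (0 < a)) = a.
Proof.
move=> a0 /=; case: ltrP => ha; first by rewrite invrK gtr0_norm.
by rewrite invrK ler0_norm ?opprK // le_eqVlt ha orbT.
Qed.

Lemma wv_mkC (u a x y : R) : x ^+ 2 + y ^+ 2 - u * a = 1 ->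
  forall j, wv (mkC u a x y) j = vec4 u a x y j.
Proof.
move=> H j; rewrite /mkC /wv /vec4; case: eqP => [a0|/eqP a0].
- case: j => [[|[|[|[|?]]]] ?] //=. by field.
- have hc := curv_mkC x y a0.
  case: j => [[|[|[|[|?]]]] ?] //=; rewrite ?hc //.
  + rewrite /= in hc; rewrite hc.
    have -> : u = (x ^+ 2 + y ^+ 2 - 1) / a.
      by apply: (@mulIf _ a) => //; rewrite mulfVK //; lra.
    by field.
  all: by rewrite /= in hc; rewrite hc; field.
Qed.

Lemma valid_mkC (u a x y : R) : x ^+ 2 + y ^+ 2 - u * a = 1 -> valid_oc (mkC u a x y).
Proof.
rewrite /mkC; case: eqP => [->|/eqP a0] /= H; first by rewrite -H mulr0 subr0.
by rewrite invr_gt0 normr_gt0.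
Qed.
End C.

Lemma Bq4_ext (R : realType) (f f' g g' : 'I_4 -> R) :
  (forall i, f i = f' i) -> (forall i, g i = g' i) -> Bq4 f g = Bq4 f' g'.
Proof. by move=> Hf Hg; rewrite /Bq4 !Hf !Hg. Qed.

Section Conv.
Variable R : realType.
Variable M : 'M[R]_(4, 3).
Hypotheses (HM0 : col 0 M != 0) (HM : M^T *m QD R *m M = W3 R).

Definition aM (i : 'I_4) := M i p0.
Definition xM (i : 'I_4) := M i p1.
Definition yM (i : 'I_4) := M i p2.

Lemma HMe j k : Bq4 (fun i => M i j) (fun i => M i k) = W3 R j k.
Proof. by rewrite -E2 HM. Qed.

Let Haa : Bq4 aM aM = 0. Proof. by rewrite HMe mxE. Qed.
Let Hax : Bq4 aM xM = 0. Proof. by rewrite HMe mxE. Qed.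
Let Hay : Bq4 aM yM = 0. Proof. by rewrite HMe mxE. Qed.
Let Hxx : Bq4 xM xM = 2. Proof. by rewrite HMe mxE. Qed.
Let Hyy : Bq4 yM yM = 2. Proof. by rewrite HMe mxE. Qed.
Let Hxy : Bq4 xM yM = 0. Proof. by rewrite HMe mxE. Qed.

Lemma sM0 : sU aM != 0.
Proof.
apply/eqP => s0; move/eqP: HM0; apply; apply/matrixP => i j.
have : aM o0 = 0 /\ aM o1 = 0 /\ aM o2 = 0 /\ aM o3 = 0.
  move: Haa s0; rewrite /Bq4 /sU /sumf => H1 H2.
  have e : aM o0 ^+ 2 + aM o1 ^+ 2 + aM o2 ^+ 2 + aM o3 ^+ 2 = 0.
    rewrite -[LHS]subr0 -[X in _ - X](_ : (aM o0 + aM o1 + aM o2 + aM o3) * (aM o0 + aM o1 + aM o2 + aM o3) / 2 = 0).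
      rewrite -H1; ring.
    by rewrite H2 mul0r mul0r.
  have := sqr_ge0 (aM o0); have := sqr_ge0 (aM o1); have := sqr_ge0 (aM o2); have := sqr_ge0 (aM o3).
  move=> q3 q2 q1 q0.
  have z0 : aM o0 ^+ 2 = 0 by lra.
  have z1 : aM o1 ^+ 2 = 0 by lra.
  have z2 : aM o2 ^+ 2 = 0 by lra.
  have z3 : aM o3 ^+ 2 = 0 by lra.
  move/eqP: z0; move/eqP: z1; move/eqP: z2; move/eqP: z3.
  by rewrite !sqrf_eq0 => /eqP -> /eqP -> /eqP -> /eqP ->.
case=> [z0 [z1 [z2 z3]]].
rewrite !mxE; have -> : (0 : 'I_3) = p0 by apply: val_inj.
by case: (ord4_cases i) => [->|[->|[->|->]]].
Qed.

Definition uM := uU aM xM yM.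

Definition Wm : 'M[R]_4 := \matrix_(i < 4, j < 4) vec4 (uM i) (aM i) (xM i) (yM i) j.

Lemma Wm_aug : Wm^T *m QD R *m Wm = 2 *: PW R.
Proof.
have Bua := Bua sM0 Haa Hax Hay.
have Bux := Bux sM0 Hax Hxx Hxy.
have Buy := Buy sM0 Hay Hyy Hxy.
have Buu := Buu sM0 Haa Hax Hay Hxx Hyy Hxy.
have c0 : forall i, Wm i o0 = uM i by move=> i; rewrite mxE.
have c1 : forall i, Wm i o1 = aM i by move=> i; rewrite mxE.
have c2 : forall i, Wm i o2 = xM i by move=> i; rewrite mxE.
have c3 : forall i, Wm i o3 = yM i by move=> i; rewrite mxE.
apply/matrixP => j k; rewrite E2 !mxE.
case: (ord4_cases j) => [->|[->|[->|->]]]; case: (ord4_cases k) => [->|[->|[->|->]]] /=;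
  rewrite ?(Bq4_ext c0 c0) ?(Bq4_ext c0 c1) ?(Bq4_ext c0 c2) ?(Bq4_ext c0 c3)
          ?(Bq4_ext c1 c0) ?(Bq4_ext c1 c1) ?(Bq4_ext c1 c2) ?(Bq4_ext c1 c3)
          ?(Bq4_ext c2 c0) ?(Bq4_ext c2 c1) ?(Bq4_ext c2 c2) ?(Bq4_ext c2 c3)
          ?(Bq4_ext c3 c0) ?(Bq4_ext c3 c1) ?(Bq4_ext c3 c2) ?(Bq4_ext c3 c3);
  rewrite ?[Bq4 aM uM]Bq4_sym ?[Bq4 xM uM]Bq4_sym ?[Bq4 yM uM]Bq4_sym
          ?[Bq4 xM aM]Bq4_sym ?[Bq4 yM aM]Bq4_sym ?[Bq4 yM xM]Bq4_sym;
  rewrite /uM ?Bua ?Bux ?Buy ?Buu ?Haa ?Hax ?Hay ?Hxx ?Hyy ?Hxy; lra.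
Qed.

Lemma Wm_gram : Wm *m QW R *m Wm^T = GG R.
Proof. exact: aug_gram Wm_aug. Qed.

Lemma Wm_diag i : xM i ^+ 2 + yM i ^+ 2 - uM i * aM i = 1.
Proof.
have := congr1 (fun A : 'M_4 => A i i) Wm_gram; rewrite /= E1 GG_eq /Lf4.
have c0 : Wm i o0 = uM i by rewrite mxE.
have c1 : Wm i o1 = aM i by rewrite mxE.
have c2 : Wm i o2 = xM i by rewrite mxE.
have c3 : Wm i o3 = yM i by rewrite mxE.
rewrite c0 c1 c2 c3 => <-; move: (uM i) (aM i) (xM i) (yM i) => U A X Y; by field.
Qed.

Definition Dm (i : 'I_4) := mkC (uM i) (aM i) (xM i) (yM i).

Lemma Dm_valid i : valid_oc (Dm i).
Proof. exact: valid_mkC (Wm_diag i). Qed.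

Lemma WD_Dm : WD Dm = Wm.
Proof. by apply/matrixP => i j; rewrite !mxE wv_mkC // Wm_diag. Qed.

Lemma MD_Dm : MD Dm = M.
Proof.
apply/matrixP => i j; rewrite MD_WD WD_Dm mxE.
by case: (ord3_cases j) => [->|[->|->]].
Qed.

Lemma Dm_aug : (WD Dm)^T *m QD R *m WD Dm = 2 *: PW R.
Proof. by rewrite WD_Dm Wm_aug. Qed.
End Conv.

Section B.
Variable R : realType.
Implicit Types (C D F : ocircle R) (x y r h c g d u v : R) (b : bool).

Lemma antipodal_LL C D F : (forall j, wv D j = - wv C j) -> LL D F = - LL C F.
Proof. move=> H; rewrite /LL /Lf4 !H; by field. Qed.

Lemma rho_sq x y r b : 0 < r -> (curv (OCirc x y r b))^-1 ^+ 2 = r ^+ 2.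
Proof. by move=> r0; case: b => /=; rewrite ?invrN invrK ?sqrrN. Qed.

Lemma circ_unique (vx vy ex ey q1 q2 : R) : vx ^+ 2 + vy ^+ 2 = q1 ^+ 2 ->
  (vx - ex) ^+ 2 + (vy - ey) ^+ 2 = q2 ^+ 2 -> ex ^+ 2 + ey ^+ 2 = (q1 + q2) ^+ 2 ->
  (q1 + q2) * vx = q1 * ex /\ (q1 + q2) * vy = q1 * ey.
Proof.
move=> H1 H2 H3.
have : ((q1 + q2) * vx - q1 * ex) ^+ 2 + ((q1 + q2) * vy - q1 * ey) ^+ 2 = 0.
  have -> : ((q1 + q2) * vx - q1 * ex) ^+ 2 + ((q1 + q2) * vy - q1 * ey) ^+ 2 =
    (q1 + q2) ^+ 2 * (vx ^+ 2 + vy ^+ 2) - q1 * (q1 + q2) * ((vx ^+ 2 + vy ^+ 2) + (ex ^+ 2 + ey ^+ 2)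
      - ((vx - ex) ^+ 2 + (vy - ey) ^+ 2)) + q1 ^+ 2 * (ex ^+ 2 + ey ^+ 2) by ring.
  rewrite H1 H2 H3; ring.
case/sumsq0 => /eqP; rewrite subr_eq0 => /eqP -> /eqP; rewrite subr_eq0 => /eqP ->; done.
Qed.

Lemma cc_bwd x1 y1 r1 b1 x2 y2 r2 b2 : 0 < r1 -> 0 < r2 ->
  LL (OCirc x1 y1 r1 b1) (OCirc x2 y2 r2 b2) = -1 ->
  ~ (forall j, wv (OCirc x2 y2 r2 b2) j = - wv (OCirc x1 y1 r1 b1) j) ->
  tangent (OCirc x1 y1 r1 b1) (OCirc x2 y2 r2 b2).
Proof.
move=> r1p r2p; rewrite LL_cc // => HL Hna.
have k10 := curv_circ x1 y1 b1 r1p; have k20 := curv_circ x2 y2 b2 r2p.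
have rs1 := rho_sq x1 y1 b1 r1p; have rs2 := rho_sq x2 y2 b2 r2p.
have Hw := Hna.
move: HL Hw k10 k20 rs1 rs2.
have -> : wv (OCirc x1 y1 r1 b1) = vec4 (ku (OCirc x1 y1 r1 b1)) (curv (OCirc x1 y1 r1 b1))
   (curv (OCirc x1 y1 r1 b1) * x1) (curv (OCirc x1 y1 r1 b1) * y1).
  by apply: functional_extensionality => j; rewrite /wv /vec4.
have -> : wv (OCirc x2 y2 r2 b2) = vec4 (ku (OCirc x2 y2 r2 b2)) (curv (OCirc x2 y2 r2 b2))
   (curv (OCirc x2 y2 r2 b2) * x2) (curv (OCirc x2 y2 r2 b2) * y2).
  by apply: functional_extensionality => j; rewrite /wv /vec4.
rewrite /ku.
move: (curv (OCirc x1 y1 r1 b1)) (curv (OCirc x2 y2 r2 b2)) => k1 k2 HL Hna' k10 k20 rs1 rs2.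
have HD : (x1 - x2) ^+ 2 + (y1 - y2) ^+ 2 = (k1^-1 + k2^-1) ^+ 2.
  have e1 : k1 * k2 * ((x1 - x2) ^+ 2 + (y1 - y2) ^+ 2) = k2 / k1 + k1 / k2 + 2 by lra.
  apply: (@mulfI _ (k1 * k2)); first by rewrite mulf_neq0.
  rewrite e1; by field; rewrite k10 k20.
have [S0|S0] := eqVneq (k1^-1 + k2^-1) 0.
  exfalso; apply: Hna' => j.
  have E2 : k2 = - k1.
    by apply: invr_inj; rewrite invrN; apply/eqP; rewrite -addr_eq0 addrC S0.
  move: HD; rewrite S0 expr0n /= => /sumsq0 [/eqP]; rewrite subr_eq0 => /eqP ex /eqP.
  rewrite subr_eq0 => /eqP ey; subst x2 y2.
  case: j => [[|[|[|[|?]]]] ?] //; rewrite /vec4 /= E2 ?invrN; by field.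
have KS : k2 + k1 != 0.
  apply/eqP => H; move/eqP: S0; apply.
  have -> : k2 = - k1 by lra.
  by rewrite invrN addrN.
pose t := k1^-1 / (k1^-1 + k2^-1).
exists (Some (x1 + t * (x2 - x1), y1 + t * (y2 - y1))); split.
- split => /=.
  + rewrite -rs1.
    have -> : (x1 + t * (x2 - x1) - x1) ^+ 2 + (y1 + t * (y2 - y1) - y1) ^+ 2 = t ^+ 2 * ((x1 - x2) ^+ 2 + (y1 - y2) ^+ 2) by ring.
    by rewrite HD /t; field; rewrite k10 k20 KS.
  + rewrite -rs2.
    have -> : (x1 + t * (x2 - x1) - x2) ^+ 2 + (y1 + t * (y2 - y1) - y2) ^+ 2 = (t - 1) ^+ 2 * ((x1 - x2) ^+ 2 + (y1 - y2) ^+ 2) by ring.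
    by rewrite HD /t; field; rewrite k10 k20 KS.
- case=> [[u v]|] [] //= H1 H2.
  have [] := @circ_unique (u - x1) (v - y1) (x2 - x1) (y2 - y1) (k1^-1) (k2^-1).
  + by rewrite rs1.
  + by rewrite rs2 -H2; congr (_ ^+ 2 + _ ^+ 2); ring.
  + by rewrite -HD; ring.
  move=> e1 e2.
  congr (Some (_, _)).
  + have Hu' : u - x1 = k1^-1 * (x2 - x1) / (k1^-1 + k2^-1).
      by rewrite -e1; field; rewrite k10 k20 KS.
    have -> : u = x1 + (u - x1) by ring.
    by rewrite Hu' /t; field; rewrite k10 k20 KS.
  + have Hv' : v - y1 = k1^-1 * (y2 - y1) / (k1^-1 + k2^-1).
      by rewrite -e2; field; rewrite k10 k20 KS.
    have -> : v = y1 + (v - y1) by ring.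
    by rewrite Hv' /t; field; rewrite k10 k20 KS.
Qed.

Lemma lc_bwd h1 h2 c x y r b : h1 ^+ 2 + h2 ^+ 2 = 1 -> 0 < r ->
  LL (OLine h1 h2 c) (OCirc x y r b) = -1 -> tangent (OLine h1 h2 c) (OCirc x y r b).
Proof.
move=> Hh r0; rewrite LL_lc // => HL.
have k0 := curv_circ x y b r0; have rs := rho_sq x y b r0.
move: HL k0 rs; move: (curv (OCirc x y r b)) => k HL k0 rs.
have E : h1 * x + h2 * y - c = - k^-1.
  apply: (@mulfI _ k) => //; rewrite HL mulrN mulfV //.
move: E rs; move: (k^-1) => q E rs.
exists (Some (x + q * h1, y + q * h2)); split.
- split => /=.
  + have -> : h1 * (x + q * h1) + h2 * (y + q * h2) = (h1 * x + h2 * y) + q * (h1 ^+ 2 + h2 ^+ 2) by ring.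
    rewrite Hh mulr1; lra.
  + have -> : (x + q * h1 - x) ^+ 2 + (y + q * h2 - y) ^+ 2 = q ^+ 2 * (h1 ^+ 2 + h2 ^+ 2) by ring.
    by rewrite Hh mulr1.
- case=> [[u v]|] [] //= H1 H2.
  have : (u - x - q * h1) ^+ 2 + (v - y - q * h2) ^+ 2 = 0.
    have -> : (u - x - q * h1) ^+ 2 + (v - y - q * h2) ^+ 2 =
      ((u - x) ^+ 2 + (v - y) ^+ 2) - 2 * q * ((h1 * u + h2 * v) - (h1 * x + h2 * y)) + q ^+ 2 * (h1 ^+ 2 + h2 ^+ 2) by ring.
    rewrite H2 H1 Hh -rs mulr1.
    have -> : c - (h1 * x + h2 * y) = q by lra.
    ring.
  case/sumsq0 => /eqP; rewrite subr_eq0 => /eqP eu /eqP; rewrite subr_eq0 => /eqP ev.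
  by congr (Some (_, _)); lra.
Qed.

Lemma ll_bwd h1 h2 c g1 g2 d : h1 ^+ 2 + h2 ^+ 2 = 1 -> g1 ^+ 2 + g2 ^+ 2 = 1 ->
  LL (OLine h1 h2 c) (OLine g1 g2 d) = -1 ->
  ~ (forall j, wv (OLine g1 g2 d) j = - wv (OLine h1 h2 c) j) ->
  tangent (OLine h1 h2 c) (OLine g1 g2 d).
Proof.
move=> Hh Hg; rewrite LL_ll => HL Hna.
have : (h1 + g1) ^+ 2 + (h2 + g2) ^+ 2 = 0.
  have -> : (h1 + g1) ^+ 2 + (h2 + g2) ^+ 2 = (h1 ^+ 2 + h2 ^+ 2) + (g1 ^+ 2 + g2 ^+ 2) + 2 * (h1 * g1 + h2 * g2) by ring.
  rewrite Hh Hg HL; ring.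
case/sumsq0 => /eqP; rewrite addr_eq0 => /eqP e1 /eqP; rewrite addr_eq0 => /eqP e2.
exists None; split => //.
case=> [[u v]|] // [] /= H1 H2; exfalso; apply: Hna => j.
have ed : d = - c by rewrite -H2 -H1 e1 e2; ring.
case: j => [[|[|[|[|?]]]] ?] //; rewrite /wv /= ?ed ?e1 ?e2 ?opprK ?oppr0 //; ring.
Qed.

Lemma tangent_bwd C D F : valid_oc C -> valid_oc D ->
  LL C D = -1 -> LL C F = -1 -> LL D F = -1 -> tangent C D.
Proof.
move=> vC vD HCD HCF HDF.
have Hna : ~ (forall j, wv D j = - wv C j).
  move=> H; move: HDF; rewrite (antipodal_LL F H) HCF opprK => E; lra.
clear HCF HDF.
case: C vC HCD Hna => [x1 y1 r1 b1|h1 h2 c]; case: D vD => [x2 y2 r2 b2|g1 g2 d] /= vD vC HCD Hna.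
- exact: cc_bwd.
- by apply: tangent_sym; apply: lc_bwd => //; rewrite LL_sym.
- exact: lc_bwd.
- exact: ll_bwd.
Qed.
End B.

Section D.
Variable R : realType.
Implicit Types (C D F : ocircle R) (x y r h c g d u v : R) (b : bool).

Lemma pair_compl (i j : 'I_4) : i != j -> exists m n : 'I_4,
  [/\ m != i, m != j, n != i, n != j & m != n] /\
      (forall t, t = i \/ t = j \/ t = m \/ t = n) /\
      forall f : 'I_4 -> R, f o0 + f o1 + f o2 + f o3 = f i + f j + f m + f n.
Proof.
case: (ord4_cases i) => [->|[->|[->|->]]]; case: (ord4_cases j) => [->|[->|[->|->]]] // _.
- exists o2, o3; split; [by []|split => [t|f]]; [by case: (ord4_cases t) => [->|[->|[->|->]]]; tauto | ring].
- exists o1, o3; split; [by []|split => [t|f]]; [by case: (ord4_cases t) => [->|[->|[->|->]]]; tauto | ring].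
- exists o1, o2; split; [by []|split => [t|f]]; [by case: (ord4_cases t) => [->|[->|[->|->]]]; tauto | ring].
- exists o2, o3; split; [by []|split => [t|f]]; [by case: (ord4_cases t) => [->|[->|[->|->]]]; tauto | ring].
- exists o0, o3; split; [by []|split => [t|f]]; [by case: (ord4_cases t) => [->|[->|[->|->]]]; tauto | ring].
- exists o0, o2; split; [by []|split => [t|f]]; [by case: (ord4_cases t) => [->|[->|[->|->]]]; tauto | ring].
- exists o1, o3; split; [by []|split => [t|f]]; [by case: (ord4_cases t) => [->|[->|[->|->]]]; tauto | ring].
- exists o0, o3; split; [by []|split => [t|f]]; [by case: (ord4_cases t) => [->|[->|[->|->]]]; tauto | ring].
- exists o0, o1; split; [by []|split => [t|f]]; [by case: (ord4_cases t) => [->|[->|[->|->]]]; tauto | ring].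
- exists o1, o2; split; [by []|split => [t|f]]; [by case: (ord4_cases t) => [->|[->|[->|->]]]; tauto | ring].
- exists o0, o2; split; [by []|split => [t|f]]; [by case: (ord4_cases t) => [->|[->|[->|->]]]; tauto | ring].
- exists o0, o1; split; [by []|split => [t|f]]; [by case: (ord4_cases t) => [->|[->|[->|->]]]; tauto | ring].
Qed.

Lemma cs_lt (vx vy wx wy a b : R) : 0 < a -> 0 <= b ->
  vx ^+ 2 + vy ^+ 2 < a ^+ 2 -> wx ^+ 2 + wy ^+ 2 <= b ^+ 2 ->
  (vx + wx) ^+ 2 + (vy + wy) ^+ 2 < (a + b) ^+ 2.
Proof.
move=> a0 b0 hv hw.
have Lag : (vx * wx + vy * wy) ^+ 2 + (vx * wy - vy * wx) ^+ 2 =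
  (vx ^+ 2 + vy ^+ 2) * (wx ^+ 2 + wy ^+ 2) by ring.
have -> : (vx + wx) ^+ 2 + (vy + wy) ^+ 2 =
  (vx ^+ 2 + vy ^+ 2) + (wx ^+ 2 + wy ^+ 2) + 2 * (vx * wx + vy * wy) by ring.
have hw0 : 0 <= wx ^+ 2 + wy ^+ 2 by have := sqr_ge0 wx; have := sqr_ge0 wy; lra.
have hv0 : 0 <= vx ^+ 2 + vy ^+ 2 by have := sqr_ge0 vx; have := sqr_ge0 vy; lra.
have hc := sqr_ge0 (vx * wy - vy * wx).
move: Lag hc hw0 hv0 hv hw.
move: (vx * wx + vy * wy) (vx * wy - vy * wx) (vx ^+ 2 + vy ^+ 2) (wx ^+ 2 + wy ^+ 2) => t e V W.
move=> Lag hc hw0 hv0 hv hw.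
case: (lerP t 0) => ht; first by nra.
have h1 : t ^+ 2 <= V * W by lra.
have h2 : V * W <= V * b ^+ 2 by apply: ler_wpM2l.
have h3 : t ^+ 2 < a ^+ 2 * b ^+ 2.
  case: (eqVneq b 0) => [b00|bn0].
    subst b; have : W = 0 by move: hw; rewrite expr0n /=; lra.
    move=> W0; move: h1; rewrite W0 mulr0 => h1; nra.
  have : V * b ^+ 2 < a ^+ 2 * b ^+ 2 by rewrite ltr_pM2r // exprn_gt0 // lt_def bn0 b0.
  lra.
have : t < a * b.
  rewrite -exprMn in h3; move: h3; have := mulr_ge0 (ltW a0) b0.
  move: (a * b) => m m0 h3; nra.
nra.
Qed.

Lemma dot_lt (h1 h2 vx vy r : R) : h1 ^+ 2 + h2 ^+ 2 = 1 -> 0 < r ->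
  vx ^+ 2 + vy ^+ 2 < r ^+ 2 -> h1 * vx + h2 * vy < r.
Proof.
move=> Hh r0 hv.
have Lag : (h1 * vx + h2 * vy) ^+ 2 + (h1 * vy - h2 * vx) ^+ 2 =
  (h1 ^+ 2 + h2 ^+ 2) * (vx ^+ 2 + vy ^+ 2) by ring.
rewrite Hh mul1r in Lag.
have hc := sqr_ge0 (h1 * vy - h2 * vx).
move: Lag hc; move: (h1 * vx + h2 * vy) (h1 * vy - h2 * vx) => t e Lag hc.
nra.
Qed.

Lemma cc_D2 x1 y1 r1 b1 x2 y2 r2 b2 : 0 < r1 -> 0 < r2 ->
  LL (OCirc x1 y1 r1 b1) (OCirc x2 y2 r2 b2) = -1 ->
  (x1 - x2) ^+ 2 + (y1 - y2) ^+ 2 = ((curv (OCirc x1 y1 r1 b1))^-1 + (curv (OCirc x2 y2 r2 b2))^-1) ^+ 2.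
Proof.
move=> r1p r2p; rewrite LL_cc // => HL.
have k10 := curv_circ x1 y1 b1 r1p; have k20 := curv_circ x2 y2 b2 r2p.
move: HL k10 k20; move: (curv (OCirc x1 y1 r1 b1)) (curv (OCirc x2 y2 r2 b2)) => k1 k2 HL k10 k20.
have e1 : k1 * k2 * ((x1 - x2) ^+ 2 + (y1 - y2) ^+ 2) = k2 / k1 + k1 / k2 + 2 by lra.
apply: (@mulfI _ (k1 * k2)); first by rewrite mulf_neq0.
rewrite e1; by field; rewrite k10 k20.
Qed.

Lemma inv_lt (r1 r2 : R) : 0 < r1 -> 0 < r2 -> 0 < r1^-1 - r2^-1 -> r1 < r2.
Proof.
move=> h1 h2 h.
have -> : r2 = r1 + r1 * r2 * (r1^-1 - r2^-1) by field; rewrite !gt_eqF.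
have : 0 < r1 * r2 * (r1^-1 - r2^-1) by rewrite !mulr_gt0.
lra.
Qed.

Lemma disj_pos C D : valid_oc C -> valid_oc D -> LL C D = -1 ->
  0 < curv C + curv D -> disj C D.
Proof.
case: C => [x1 y1 r1 b1|h1 h2 c]; case: D => [x2 y2 r2 b2|g1 g2 d] /= vC vD HL Hs.
- have HD := cc_D2 vC vD HL.
  clear HL; case: b1 HD Hs; case: b2 => /= HD Hs [u v] /= H1 H2; rewrite ?invrN ?invrK in HD.
  + have := @cs_lt (x1 - u) (y1 - v) (u - x2) (v - y2) r1 r2 vC (ltW vD).
    rewrite (_ : (x1 - u) ^+ 2 + (y1 - v) ^+ 2 = (u - x1) ^+ 2 + (v - y1) ^+ 2); last by ring.
    move/(_ H1 (ltW H2)).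
    rewrite (_ : x1 - u + (u - x2) = x1 - x2); last by ring.
    rewrite (_ : y1 - v + (v - y2) = y1 - y2); last by ring.
    rewrite HD; lra.
  + have lt12 : r1 < r2 by apply: inv_lt => //; lra.
    have := @cs_lt (u - x1) (v - y1) (x1 - x2) (y1 - y2) r1 (r2 - r1) vC.
    rewrite subr_ge0 (ltW lt12) HD => /(_ isT H1).
    rewrite (_ : (r1 + - r2) ^+ 2 = (r2 - r1) ^+ 2); last by ring.
    move/(_ (lexx _)).
    rewrite (_ : u - x1 + (x1 - x2) = u - x2); last by ring.
    rewrite (_ : v - y1 + (y1 - y2) = v - y2); last by ring.
    rewrite (_ : r1 + (r2 - r1) = r2); last by ring.
    lra.
  + have lt21 : r2 < r1 by apply: inv_lt => //; lra.
    have := @cs_lt (u - x2) (v - y2) (x2 - x1) (y2 - y1) r2 (r1 - r2) vD.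
    rewrite subr_ge0 (ltW lt21) => /(_ isT H2).
    rewrite (_ : (x2 - x1) ^+ 2 + (y2 - y1) ^+ 2 = (x1 - x2) ^+ 2 + (y1 - y2) ^+ 2); last by ring.
    rewrite HD (_ : (- r1 + r2) ^+ 2 = (r1 - r2) ^+ 2); last by ring.
    move/(_ (lexx _)).
    rewrite (_ : u - x2 + (x2 - x1) = u - x1); last by ring.
    rewrite (_ : v - y2 + (y2 - y1) = v - y1); last by ring.
    rewrite (_ : r2 + (r1 - r2) = r1); last by ring.
    lra.
  + have : 0 < r1^-1 by rewrite invr_gt0.
    have : 0 < r2^-1 by rewrite invr_gt0.
    lra.
- rewrite LL_sym in HL; move: HL Hs; rewrite LL_lc // => HL; rewrite addrC.
  move: HL; case: b1 => /= HL Hs [u v] /= H1 H2; last first.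
    have : 0 < r1^-1 by rewrite invr_gt0.
    lra.
  have E : g1 * x1 + g2 * y1 - d = - r1.
    apply: (@mulfI _ r1^-1); first by rewrite invr_eq0 gt_eqF.
    by rewrite HL mulrN mulVf // gt_eqF.
  have := @dot_lt g1 g2 (u - x1) (v - y1) r1 vD vC H1.
  lra.
- move: HL Hs; rewrite LL_lc // add0r.
  case: b2 => /= HL Hs [u v] /= H1 H2; last first.
    have : 0 < r2^-1 by rewrite invr_gt0.
    lra.
  have E : h1 * x2 + h2 * y2 - c = - r2.
    apply: (@mulfI _ r2^-1); first by rewrite invr_eq0 gt_eqF.
    by rewrite HL mulrN mulVf // gt_eqF.
  have := @dot_lt h1 h2 (u - x2) (v - y2) r2 vC vD H2.
  lra.
- by move: Hs; rewrite addr0 ltxx.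
Qed.

Lemma ll_opp h1 h2 g1 g2 : h1 ^+ 2 + h2 ^+ 2 = 1 -> g1 ^+ 2 + g2 ^+ 2 = 1 ->
  h1 * g1 + h2 * g2 = -1 -> g1 = - h1 /\ g2 = - h2.
Proof.
move=> Hh Hg HL.
have : (h1 + g1) ^+ 2 + (h2 + g2) ^+ 2 = 0.
  have -> : (h1 + g1) ^+ 2 + (h2 + g2) ^+ 2 = (h1 ^+ 2 + h2 ^+ 2) + (g1 ^+ 2 + g2 ^+ 2) + 2 * (h1 * g1 + h2 * g2) by ring.
  rewrite Hh Hg HL; ring.
case/sumsq0 => e1 e2; split; lra.
Qed.

Lemma disj_ll h1 h2 c g1 g2 d : h1 ^+ 2 + h2 ^+ 2 = 1 -> g1 ^+ 2 + g2 ^+ 2 = 1 ->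
  LL (OLine h1 h2 c) (OLine g1 g2 d) = -1 -> 0 < c + d -> disj (OLine h1 h2 c) (OLine g1 g2 d).
Proof.
rewrite LL_ll => Hh Hg HL Hs [u v] /= H1 H2.
have [e1 e2] := ll_opp Hh Hg HL; subst g1 g2.
have : - h1 * u + - h2 * v = - (h1 * u + h2 * v) by ring.
lra.
Qed.

Lemma ll_c_sum h1 h2 c g1 g2 d F : h1 ^+ 2 + h2 ^+ 2 = 1 -> g1 ^+ 2 + g2 ^+ 2 = 1 ->
  valid_oc F -> 0 < curv F ->
  LL (OLine h1 h2 c) (OLine g1 g2 d) = -1 -> LL (OLine h1 h2 c) F = -1 ->
  LL (OLine g1 g2 d) F = -1 -> 0 < c + d.
Proof.
case: F => [x y r b|? ? ?] Hh Hg /= vF; last by rewrite ltxx.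
rewrite LL_ll !LL_lc // => kp HL H1 H2.
have [e1 e2] := ll_opp Hh Hg HL; subst g1 g2.
have kp' : 0 < curv (OCirc x y r b) by [].
clear kp; move: kp' H1 H2; move: (curv (OCirc x y r b)) => k kp H1 H2.
have : k * (c + d) = 2.
  have -> : k * (c + d) = - (k * (h1 * x + h2 * y - c) + k * (- h1 * x + - h2 * y - d)) by ring.
  rewrite H1 H2; ring.
move=> E; have : 0 < k * (c + d) by rewrite E.
by rewrite (pmulr_rgt0 _ kp).
Qed.

Lemma curv0_line C : valid_oc C -> curv C = 0 -> exists h1 h2 c, C = OLine h1 h2 c.
Proof.
case: C => [x y r b|h1 h2 c] /= v0 H; last by exists h1, h2, c.
by move/eqP: (curv_circ x y b v0); rewrite /= H.
Qed.

Lemma disj_conf (E : 'I_4 -> ocircle R) :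
  (forall i, valid_oc (E i)) -> (forall i j, i != j -> LL (E i) (E j) = -1) ->
  Bq4 (fun i => curv (E i)) (fun i => curv (E i)) = 0 ->
  0 < sumf (fun i => curv (E i)) -> interiors_disjoint E.
Proof.
move=> Hv HL HB Hs i j ij.
have [m [n [[mi mj ni nj mn] [Hcov Hsum]]]] := pair_compl ij.
have HB' : 2 * (curv (E i) + curv (E j)) * (curv (E m) + curv (E n)) =
   (curv (E i) - curv (E j)) ^+ 2 + (curv (E m) - curv (E n)) ^+ 2.
  move: HB Hs; rewrite /Bq4 /sumf.
  rewrite (Hsum (fun t => curv (E t))) (Hsum (fun t => curv (E t) * curv (E t))) => HB Hs.
  move: HB; move: (curv (E i)) (curv (E j)) (curv (E m)) (curv (E n)) => a b c d HB.
  apply: (@mulfI _ 2^-1); first by rewrite invr_eq0 two_neq0.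
  rewrite -[RHS]subr0 -HB; by field.
move: Hs; rewrite /sumf (Hsum (fun t => curv (E t))) /= => Hs.
have sq1 := sqr_ge0 (curv (E i) - curv (E j)); have sq2 := sqr_ge0 (curv (E m) - curv (E n)).
case: (ltgtP 0 (curv (E i) + curv (E j))) => hA.
- by apply: disj_pos => //; try apply: Hv; apply: HL.
- exfalso.
  have h0 : 0 <= 2 * (curv (E i) + curv (E j)) * (curv (E m) + curv (E n)) by rewrite HB'; lra.
  have Hs' : 0 < (curv (E i) + curv (E j)) + (curv (E m) + curv (E n)) by rewrite addrA.
  move: h0 hA Hs'; move: (curv (E i) + curv (E j)) (curv (E m) + curv (E n)) => A B h0 hA Hs'.
  nra.
- have : (curv (E i) - curv (E j)) ^+ 2 + (curv (E m) - curv (E n)) ^+ 2 = 0.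
    by rewrite -HB' -hA mulr0 mul0r.
  case/sumsq0 => /eqP; rewrite subr_eq0 => /eqP eij /eqP; rewrite subr_eq0 => /eqP emn.
  have ci : curv (E i) = 0 by lra.
  have cj : curv (E j) = 0 by lra.
  have cm : 0 < curv (E m) by lra.
  have [h1 [h2 [c Ei]]] := curv0_line (Hv i) ci.
  have [g1 [g2 [d Ej]]] := curv0_line (Hv j) cj.
  have := Hv i; have := Hv j; rewrite Ei Ej /= => vj vi.
  apply: disj_ll => //.
  + by rewrite -Ei -Ej; apply: HL.
  + apply: (@ll_c_sum h1 h2 c g1 g2 d (E m)) => //; rewrite -?Ei -?Ej.
    * by apply: HL.
    * by apply: HL; rewrite eq_sym.
    * by apply: HL; rewrite eq_sym.
Qed.
End D.

Section T.
Variable R : realType.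
Implicit Types (C D F : ocircle R).

Definition zf (p : epoint R) : 'I_4 -> R :=
  match p with Some (u, v) => vec4 (u ^+ 2 + v ^+ 2) 1 u v | None => vec4 1 0 0 0 end.

Definition zvec (p : epoint R) : 'cV[R]_4 := \col_(k < 4) zf p k.

Lemma on_Lp C p : valid_oc C -> on_oc C p -> Lf4 (wv C) (zf p) = 0.
Proof.
case: C => [x y r b|h1 h2 c]; case: p => [[u v]|] //= v0 H; rewrite /Lf4 /wv /zf /vec4 /=.
- have k0 := curv_circ x y b v0; have rs := rho_sq x y b v0.
  move: k0 rs => /= k0 rs; move: k0 rs; move: (if b then r^-1 else - r^-1) => k k0 rs.
  have -> : - ((k * (x ^+ 2 + y ^+ 2) - k^-1) * 1 + k * (u ^+ 2 + v ^+ 2)) / 2 + k * x * u + k * y * v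
     = - (k * ((u - x) ^+ 2 + (v - y) ^+ 2) - k^-1) / 2 by field.
  rewrite H -rs; by field.
- rewrite -H; by field.
- by field.
Qed.

Lemma Lf4_zz p : Lf4 (zf p) (zf p) = 0.
Proof. by case: p => [[u v]|]; rewrite /Lf4 /zf /vec4 /=; field. Qed.

Lemma trQW : (QW R)^T = QW R.
Proof.
apply/matrixP => i j; rewrite !mxE.
by case: (ord4_cases i) => [->|[->|[->|->]]]; case: (ord4_cases j) => [->|[->|[->|->]]].
Qed.

Lemma E3 (W : 'M[R]_4) (z : 'cV[R]_4) n :
  (W *m QW R *m z) n 0 = Lf4 (W n) (fun k => z k 0).
Proof. rewrite !mxE sum4 !mxE !sum4 !mxE /= /Lf4. by field. Qed.

Lemma E4 (z : 'cV[R]_4) : (z^T *m QW R *m z) 0 0 = Lf4 (fun k => z k 0) (fun k => z k 0).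
Proof. rewrite !mxE sum4 !mxE !sum4 !mxE /= /Lf4. by field. Qed.

Lemma aug_point (W : 'M[R]_4) (z : 'cV[R]_4) : W^T *m QD R *m W = 2 *: PW R ->
  (W *m QW R *m z)^T *m QD R *m (W *m QW R *m z) = 2 *: (z^T *m QW R *m z) /\
  W^T *m QD R *m (W *m QW R *m z) = 2 *: z.
Proof.
move=> H; split.
- have -> : (W *m QW R *m z)^T *m QD R *m (W *m QW R *m z) =
      z^T *m QW R *m ((W^T *m QD R *m W) *m (QW R *m z)).
    by rewrite !trmx_mul trQW !mulmxA.
  by rewrite H -scalemxAl mulmxA PWQW mul1mx -scalemxAr.
- by rewrite !mulmxA H -!scalemxAl PWQW mul1mx.
Qed.

Lemma three_zero (f : 'I_4 -> R) i j t : i != j -> t != i -> t != j ->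
  f i = 0 -> f j = 0 -> f t = 0 -> Bq4 f f = 0 -> forall n, f n = 0.
Proof.
move=> ij ti tj fi fj ft HB.
have [m [n [[mi mj ni nj mn] [Hcov Hsum]]]] := @pair_compl R _ _ ij.
have HB' : f i * f i + f j * f j + f m * f m + f n * f n -
           (f i + f j + f m + f n) * (f i + f j + f m + f n) / 2 = 0.
  by rewrite -HB /Bq4 (Hsum f) (Hsum (fun k => f k * f k)).
have [fm fn] : f m = 0 /\ f n = 0.
  case: (Hcov t) => [E|[E|[E|E]]].
  - by move: ti; rewrite E eqxx.
  - by move: tj; rewrite E eqxx.
  - subst t; split => //; move: HB'; rewrite fi fj ft => HB'.
    have : f n ^+ 2 = 0 by move: HB'; move: (f n) => a ha; lra.
    by move/eqP; rewrite sqrf_eq0 => /eqP.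
  - subst t; split => //; move: HB'; rewrite fi fj ft => HB'.
    have : f m ^+ 2 = 0 by move: HB'; move: (f m) => a ha; lra.
    by move/eqP; rewrite sqrf_eq0 => /eqP.
by move=> k; case: (Hcov k) => [->|[->|[->|->]]].
Qed.

Lemma no_triple (E : 'I_4 -> ocircle R) :
  (forall i, valid_oc (E i)) -> (WD E)^T *m QD R *m WD E = 2 *: PW R ->
  forall i j t p, i != j -> t != i -> t != j ->
  on_oc (E i) p -> on_oc (E j) p -> on_oc (E t) p -> False.
Proof.
move=> Hv Haug i j t p ij ti tj Hi Hj Ht.
have [H1 H2] := aug_point (zvec p) Haug.
set al := WD E *m QW R *m zvec p in H1 H2.
have Hal : forall n, al n 0 = Lf4 (wv (E n)) (zf p).
  move=> n; rewrite /al E3 /Lf4 !mxE //.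
have Hz : Lf4 (fun k => zvec p k 0) (fun k => zvec p k 0) = 0.
  by rewrite /Lf4 !mxE -/(Lf4 (zf p) (zf p)) Lf4_zz.
have HB : Bq4 (fun n => al n 0) (fun n => al n 0) = 0.
  have := congr1 (fun A : 'M_1 => A 0 0) H1; rewrite /= E2 => ->.
  by rewrite mxE E4 Hz mulr0.
have Z := three_zero ij ti tj (etrans (Hal i) (on_Lp (Hv i) Hi))
  (etrans (Hal j) (on_Lp (Hv j) Hj)) (etrans (Hal t) (on_Lp (Hv t) Ht)) HB.
have al0 : al = 0 by apply/matrixP => n k; rewrite (ord1 k) Z mxE.
move: H2; rewrite al0 mulmx0 => /esym /eqP; rewrite scaler_eq0 (negbTE (two_neq0 R)) /= => /eqP z0.
case: p z0 {Hi Hj Ht Hal Hz HB Z al0 H1 al} => [[u v]|] z0.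
- have := congr1 (fun A : 'cV_4 => A o1 0) z0; rewrite !mxE /=.
  by move/eqP; rewrite oner_eq0.
- have := congr1 (fun A : 'cV_4 => A o0 0) z0; rewrite !mxE /=.
  by move/eqP; rewrite oner_eq0.
Qed.

Lemma third_idx (i j k l : 'I_4) : (i < j)%N -> (k < l)%N -> (i, j) != (k, l) ->
  exists t, [/\ i != j, t != i, t != j & (t = k \/ t = l)].
Proof.
move=> ij kl ne.
have ij' : i != j by rewrite neq_ltn ij.
case: (eqVneq k i) => [ki|ki]; case: (eqVneq k j) => [kj|kj].
- by subst k; move: ij'; rewrite kj eqxx.
- case: (eqVneq l i) => [li|li]; first by subst; rewrite ltnn in kl.
  case: (eqVneq l j) => [lj|lj]; first by subst; rewrite eqxx in ne.
  by exists l; split => //; right.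
- case: (eqVneq l i) => [li|li].
    by subst; move: (ltn_trans ij kl); rewrite ltnn.
  case: (eqVneq l j) => [lj|lj]; first by subst; rewrite ltnn in kl.
  by exists l; split => //; right.
- by exists k; split => //; left.
Qed.

Lemma od_of_aug (E : 'I_4 -> ocircle R) :
  (forall i, valid_oc (E i)) -> (WD E)^T *m QD R *m WD E = 2 *: PW R ->
  oriented_descartes E.
Proof.
move=> Hv Haug.
have HG := aug_gram Haug.
have HL : forall i j, i != j -> LL (E i) (E j) = -1.
  move=> i j ij; rewrite -LL_WD -E1 HG; exact: GG_ne.
split; first split => //.
- move=> i j ij.
  have [m [n [[mi mj _ _ _] _]]] := @pair_compl R _ _ ij.
  apply: (@tangent_bwd _ _ _ (E m)) => //.
  + by apply: HL.
  + by apply: HL; rewrite eq_sym.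
  + by apply: HL; rewrite eq_sym.
- move=> i j k l p ij kl ne Hi Hj Hk Hl.
  have [t [ij' ti tj [Et|Et]]] := third_idx ij kl ne; subst t.
  + exact: (no_triple Hv Haug ij' ti tj Hi Hj Hk).
  + exact: (no_triple Hv Haug ij' ti tj Hi Hj Hl).
- have c1 : forall i, WD E i o1 = curv (E i) by move=> i; rewrite mxE.
  have c0 : forall i, WD E i o0 = ku (E i) by move=> i; rewrite mxE.
  have Hkk : Bq4 (fun i => curv (E i)) (fun i => curv (E i)) = 0.
    have := congr1 (fun A : 'M_4 => A o1 o1) Haug; rewrite /= E2 (Bq4_ext c1 c1) => ->.
    by rewrite !mxE /= mulr0.
  have Huk : Bq4 (fun i => ku (E i)) (fun i => curv (E i)) = -4.
    have := congr1 (fun A : 'M_4 => A o0 o1) Haug; rewrite /= E2 (Bq4_ext c0 c1) => ->.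
    rewrite !mxE /=; lra.
  have Hs : sumf (fun i => curv (E i)) != 0.
    apply/eqP => s0.
    have : curv (E o0) = 0 /\ curv (E o1) = 0 /\ curv (E o2) = 0 /\ curv (E o3) = 0.
      move: Hkk s0; rewrite /Bq4 /sumf => H1 H2.
      move: H1 H2; move: (curv (E o0)) (curv (E o1)) (curv (E o2)) (curv (E o3)) => a b c d H1 H2.
      have e : a ^+ 2 + b ^+ 2 + c ^+ 2 + d ^+ 2 = 0.
        rewrite -[LHS]subr0 -[X in _ - X](_ : (a + b + c + d) * (a + b + c + d) / 2 = 0).
          by rewrite -H1; field.
        by rewrite H2 !mul0r.
      have := sqr_ge0 a; have := sqr_ge0 b; have := sqr_ge0 c; have := sqr_ge0 d.
      move=> q3 q2 q1 q0.
      have z0 : a ^+ 2 = 0 by lra.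
      have z1 : b ^+ 2 = 0 by lra.
      have z2 : c ^+ 2 = 0 by lra.
      have z3 : d ^+ 2 = 0 by lra.
      move/eqP: z0; move/eqP: z1; move/eqP: z2; move/eqP: z3.
      by rewrite !sqrf_eq0 => /eqP -> /eqP -> /eqP -> /eqP ->.
    case=> [z0 [z1 [z2 z3]]].
    move: Huk; rewrite /Bq4 z0 z1 z2 z3; move=> H; clear -H; lra.
  case: (ltgtP 0 (sumf (fun i => curv (E i)))) => hs.
  + by left; apply: disj_conf.
  + right; apply: disj_conf.
    * by move=> i; apply: valid_rev.
    * by move=> i j ij; rewrite LL_rev; apply: HL.
    * by rewrite -Hkk /Bq4 !curv_rev; ring.
    * by move: hs; rewrite /sumf !curv_rev; lra.
  + by move: Hs; rewrite -hs eqxx.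
Qed.
End T.

Section Un.
Variable R : realType.
Implicit Types (C D F : ocircle R).

Lemma mvec0 C : mvec C 0 p0 = curv C.
Proof. by rewrite mvec_wv. Qed.
Lemma mvec1 C : mvec C 0 p1 = kx C.
Proof. by rewrite mvec_wv. Qed.
Lemma mvec2 C : mvec C 0 p2 = ky C.
Proof. by rewrite mvec_wv. Qed.

Lemma circ_eq (x y r x' y' r' : R) b b' : 0 < r -> 0 < r' ->
  curv (OCirc x y r b) = curv (OCirc x' y' r' b') ->
  kx (OCirc x y r b) = kx (OCirc x' y' r' b') ->
  ky (OCirc x y r b) = ky (OCirc x' y' r' b') ->
  OCirc x y r b = OCirc x' y' r' b'.
Proof.
move=> r0 r0' Hk Hx Hy.
have k0 := curv_circ x y b r0.
rewrite /kx /ky -Hk in Hx Hy.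
have ex : x = x' by apply: (mulfI k0).
have ey : y = y' by apply: (mulfI k0).
subst x' y'.
have ir : 0 < r^-1 by rewrite invr_gt0.
have ir' : 0 < r'^-1 by rewrite invr_gt0.
clear k0 Hx Hy; move: Hk; case: b; case: b' => /= Hk.
- by rewrite (invr_inj Hk).
- exfalso; lra.
- exfalso; lra.
- by rewrite (invr_inj (oppr_inj Hk)).
Qed.

Lemma same_circ C C' : valid_oc C -> valid_oc C' -> curv C != 0 ->
  curv C' = curv C -> kx C' = kx C -> ky C' = ky C -> C' = C.
Proof.
case: C => [x y r b|h1 h2 c]; case: C' => [x' y' r' b'|g1 g2 d] //= v v' k0 Hk Hx Hy.
- by apply: circ_eq.
- by move: k0; rewrite -Hk eqxx.
- by move: k0; rewrite eqxx.
- by move: k0; rewrite eqxx.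
Qed.

Lemma uniq_D (D D' : 'I_4 -> ocircle R) : oriented_descartes D -> oriented_descartes D' ->
  MD D' = MD D -> forall i, D' i = D i.
Proof.
move=> HD HD' HM.
have Hv : forall i, valid_oc (D i) by case: HD => [[]].
have Hv' : forall i, valid_oc (D' i) by case: HD' => [[]].
have Hm : forall i j, mvec (D' i) 0 j = mvec (D i) 0 j.
  by move=> i j; have := congr1 (fun A : 'M_(4,3) => A i j) HM; rewrite /= !mxE.
have Hcirc : forall i, curv (D i) != 0 -> D' i = D i.
  move=> i k0; apply: same_circ => //; by rewrite -?mvec0 -?mvec1 -?mvec2 Hm.
move=> i; case: (eqVneq (curv (D i)) 0) => [c0|]; last exact: Hcirc.
have [m Hm0] : exists m, curv (D m) != 0.
  case: (boolP [exists m, curv (D m) != 0]) => [/existsP [m Hm0] | /existsPn H]; first by exists m.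
  exfalso; have [HC _] := forward HD; move/eqP: HC; apply.
  apply/matrixP => k l; rewrite [col _ _ _ _]mxE [MD _ _ _]mxE [RHS]mxE.
  have -> : (0 : 'I_3) = p0 by apply: val_inj.
  by rewrite mvec0; apply/eqP; rewrite -[_ == 0]negbK H.
have mi : i != m by apply/eqP => E; move: Hm0; rewrite -E c0 eqxx.
have Em := Hcirc m Hm0.
have HL := fwd_LL HD mi; have HL' := fwd_LL HD' mi.
rewrite Em in HL'.
have c0' : curv (D' i) = 0 by rewrite -mvec0 Hm mvec0.
have [h1 [h2 [c Ei]]] := curv0_line (Hv i) c0.
have [g1 [g2 [d Ei']]] := curv0_line (Hv' i) c0'.
have e1 : g1 = h1 by move: (Hm i p1); rewrite !mvec1 Ei Ei'.
have e2 : g2 = h2 by move: (Hm i p2); rewrite !mvec2 Ei Ei'.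
rewrite Ei Ei' e1 e2; congr OLine.
rewrite Ei in HL; rewrite Ei' e1 e2 in HL'.
have := Hv m; move: Hm0 HL HL'; case: (D m) => [x y r b|? ? ?] /=; last by rewrite eqxx.
move=> k0 HL HL' r0; rewrite !LL_lc // in HL HL'.
have := curv_circ x y b r0 => k0'.
move: HL HL' k0'; move: (curv (OCirc x y r b)) => k HL HL' k0'.
have : k * (c - d) = 0 by rewrite mulrBr; lra.
by move/eqP; rewrite mulf_eq0 (negbTE k0') subr_eq0 => /eqP.
Qed.
End Un.

Unset Implicit Arguments.

Theorem theorem3p1 (R : realType) :
  (forall D : 'I_4 -> ocircle R, oriented_descartes D ->
     col 0 (MD D) != 0 /\ (MD D)^T *m QD R *m MD D = W3 R) /\
  (forall M : 'M[R]_(4, 3), col 0 M != 0 -> M^T *m QD R *m M = W3 R ->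
     exists D : 'I_4 -> ocircle R,
       [/\ oriented_descartes D, MD D = M &
           forall D' : 'I_4 -> ocircle R,
             oriented_descartes D' -> MD D' = M -> forall i, D' i = D i]).
Proof.
split; first by move=> D HD; exact: forward.
move=> M HM0 HM.
have HD : oriented_descartes (Dm M) := od_of_aug (Dm_valid HM0 HM) (Dm_aug HM0 HM).
exists (Dm M); split => //; first exact: MD_Dm.
move=> D' HD' HMD i; apply: uniq_D => //.
by rewrite HMD MD_Dm.
Qed.
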